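(* Let $\mathcal{C}$ be a finite prevariety over a finite alphabet $A$ with canonical $\mathcal{C}$-morphism $\eta_{\mathcal{C}}:A^*\to N_{\mathcal{C}}$, and let $\rho:2^{A^*}\to R$ be a nice multiplicative rating map. Then the set $\mathcal{P}=\{(t,r)\in N_{\mathcal{C}}\times R \mid r\in \mathcal{I}_{\mathit{SF}(\mathcal{C})}[\eta_{\mathcal{C}}^{-1}(t),\rho]\}$ is the least subset of $N_{\mathcal{C}}\times R$ that is $\mathit{SF}$-saturated for $\eta_{\mathcal{C}}$ and $\rho$.
   Context: Fix a finite alphabet $A$. A lattice is a class of languages containing $\emptyset,A^*$ and closed under union and intersection. A prevariety is a lattice of regular languages closed under complement and under quotients $u^{-1}L=\{w\mid uw\in L\}$, $Lu^{-1}=\{w\mid wu\in L\}$. $\mathit{SF}(\mathcal{C})$ is the least class containing $\mathcal{C}$ and all $\{a\}$ ($a\in A$), closed under union, complement and concatenation. A $\mathcal{C}$-morphism is a surjective monoid morphism $\eta:A^*\to N$ onto a finite monoid such that every language $\eta^{-1}(F)$, $F\subseteq N$, belongs to $\mathcal{C}$. When $\mathcal{C}$ is a finite prevariety, there is a $\mathcal{C}$-morphism $\eta_{\mathcal{C}}:A^*\to N_{\mathcal{C}}$ recognizing every language of $\mathcal{C}$, unique up to isomorphism: the canonical $\mathcal{C}$-morphism. A rating algebra is a finite commutative idempotent monoid $(R,+)$ with neutral element $0_R$, ordered by $r\le s$ iff $r+s=s$. A rating map is a map $\rho:2^{A^*}\to R$ with $\rho(\emptyset)=0_R$ and $\rho(K_1\cup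 K_2)=\rho(K_1)+\rho(K_2)$. It is nice if for every $K\subseteq A^*$ there is a finite $F\subseteq K$ with $\rho(K)=\rho(F)$. It is multiplicative if $R$ carries a multiplication making $(R,+,\cdot)$ an idempotent semiring (with $0_R$ absorbing and multiplication distributing over $+$) and $\rho(\{\varepsilon\})=1_R$, $\rho(K_1K_2)=\rho(K_1)\rho(K_2)$. Write $\rho(w)$ for $\rho(\{w\})$. For $r\in R$, $\omega$ is a positive integer such that $r^\omega$ is multiplicatively idempotent for all $r\in R$. A cover of $L$ is a finite set $\mathbf{K}$ of languages with $L\subseteq\bigcup\mathbf{K}$; it is a $\mathcal{D}$-cover if all members are in $\mathcal{D}$. Its $\rho$-imprint is $\{r\in R\mid \exists K\in\mathbf{K},\ r\le\rho(K)\}$. For a lattice $\mathcal{D}$ there exists a $\mathcal{D}$-cover of $L$ whose $\rho$-imprint is included in the $\rho$-imprint of every $\mathcal{D}$-cover of $L$; this imprint is denoted $\mathcal{I}_{\mathcal{D}}[L,\rho]$. For a morphism $\eta:A^*\to N$ into a finite monoid and a multiplicative rating map $\rho:2^{A^*}\to R$, a set $S\subseteq N\times R$ is $\mathit{SF}$-saturated for $\eta$ and $\rho$ if: (1) $(\eta(w),\rho(w))\in S$ for every $w\in A^*$; (2) if $(t,r)\in S$ and $q\le r$ then $(t,q)\in S$; (3) if $(s,q),(t,r)\in S$ then $(st,qr)\in S$; (4) if $(e,r)\in S$ and $e$ is idempotent in $N$, then $(e,r^\omega+r^{\omega+1})\in S$. *)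

(* Defs.v *)
From Stdlib Require List.
From mathcomp Require Import all_boot.
Set Implicit Arguments. Unset Strict Implicit. Unset Printing Implicit Defensive.

Definition lang (A : Type) := seq A -> Prop.

Definition lempty {A} : lang A := fun _ => False.
Definition lfull {A} : lang A := fun _ => True.
Definition lunion {A} (K L : lang A) : lang A := fun w => K w \/ L w.
Definition linter {A} (K L : lang A) : lang A := fun w => K w /\ L w.
Definition lcompl {A} (L : lang A) : lang A := fun w => ~ L w.
Definition lconcat {A} (K L : lang A) : lang A :=
  fun w => exists u v, w = u ++ v /\ K u /\ L v.
Definition lletter {A} (a : A) : lang A := fun w => w = [:: a].
Definition lword {A} (u : seq A) : lang A := fun w => w = u.
Definition lquot_l {A} (u : seq A) (L : lang A) : lang A := fun w => L (u ++ w).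
Definition lquot_r {A} (u : seq A) (L : lang A) : lang A := fun w => L (w ++ u).
Definition lfin {A : eqType} (s : seq (seq A)) : lang A := fun w => w \in s.
Definition lsubset {A} (K L : lang A) : Prop := forall w, K w -> L w.

Definition regular {A : finType} (L : lang A) : Prop :=
  exists (Q : finType) (delta : Q -> A -> Q) (q0 : Q) (F : {set Q}),
    forall w, L w <-> foldl delta q0 w \in F.

Definition lattice {A} (D : lang A -> Prop) : Prop :=
  [/\ D lempty, D lfull,
      (forall K L, D K -> D L -> D (lunion K L)) &
      (forall K L, D K -> D L -> D (linter K L))].

Definition prevariety {A : finType} (C : lang A -> Prop) : Prop :=
  [/\ lattice C, (forall L, C L -> regular L),
      (forall L, C L -> C (lcompl L)),
      (forall u L, C L -> C (lquot_l u L)) &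
      (forall u L, C L -> C (lquot_r u L))].

Definition finite_class {A} (C : lang A -> Prop) : Prop :=
  exists s : seq (lang A), forall L, C L <-> List.In L s.

Inductive SF {A} (C : lang A -> Prop) : lang A -> Prop :=
| SF_base L : C L -> SF C L
| SF_letter a : SF C (lletter a)
| SF_union K L : SF C K -> SF C L -> SF C (lunion K L)
| SF_compl L : SF C L -> SF C (lcompl L)
| SF_concat K L : SF C K -> SF C L -> SF C (lconcat K L).

Definition is_monoid {N} (mul : N -> N -> N) (one : N) : Prop :=
  [/\ associative mul, left_id one mul & right_id one mul].

Definition preimage_lang {A} {N : finType} (eta : seq A -> N) (F : {set N}) : lang A :=
  fun w => eta w \in F.

Definition C_morphism {A} {N : finType} (C : lang A -> Prop)
    (mul : N -> N -> N) (one : N) (eta : seq A -> N) : Prop :=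
  [/\ is_monoid mul one,
      eta [::] = one /\ (forall u v, eta (u ++ v) = mul (eta u) (eta v)),
      (forall x, exists w, eta w = x) &
      (forall F : {set N}, C (preimage_lang eta F))].

(** canonical C-morphism: a C-morphism recognizing every language of C
    (unique up to isomorphism when C is a finite prevariety). *)
Definition canonical_C_morphism {A} {N : finType} (C : lang A -> Prop)
    (mul : N -> N -> N) (one : N) (eta : seq A -> N) : Prop :=
  C_morphism C mul one eta /\
  (forall L, C L -> exists F : {set N}, L = preimage_lang eta F).

Definition idem_semiring {R} (add : R -> R -> R) (zero : R)
    (mul : R -> R -> R) (one : R) : Prop :=
  [/\ [/\ associative add, commutative add, (forall r, add r r = r) & left_id zero add],
      [/\ associative mul, left_id one mul & right_id one mul],
      left_zero zero mul /\ right_zero zero mul &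
      left_distributive mul add /\ right_distributive mul add].

Definition rle {R} (add : R -> R -> R) (r s : R) : Prop := add r s = s.

Definition rating_map {A} {R} (add : R -> R -> R) (zero : R) (rho : lang A -> R) : Prop :=
  rho lempty = zero /\ (forall K L, rho (lunion K L) = add (rho K) (rho L)).

Definition nice {A : eqType} {R} (rho : lang A -> R) : Prop :=
  forall K, exists s : seq (seq A), lsubset (lfin s) K /\ rho K = rho (lfin s).

Definition multiplicative_rating {A} {R} (add : R -> R -> R) (zero : R)
    (mul : R -> R -> R) (one : R) (rho : lang A -> R) : Prop :=
  [/\ idem_semiring add zero mul one, rating_map add zero rho,
      rho (lword [::]) = one &
      (forall K L, rho (lconcat K L) = mul (rho K) (rho L))].

Definition rpow {R} (mul : R -> R -> R) (one : R) (r : R) (n : nat) : R :=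
  iter n (mul r) one.

Definition is_omega {R} (mul : R -> R -> R) (one : R) (omega : nat) : Prop :=
  0 < omega /\
  (forall r, mul (rpow mul one r omega) (rpow mul one r omega) = rpow mul one r omega).

Definition cover_of {A} (D : lang A -> Prop) (L : lang A) (Ks : seq (lang A)) : Prop :=
  lsubset L (fun w => exists K, List.In K Ks /\ K w) /\
  (forall K, List.In K Ks -> D K).

Definition imprint {A} {R} (add : R -> R -> R) (rho : lang A -> R)
    (Ks : seq (lang A)) (r : R) : Prop :=
  exists K, List.In K Ks /\ rle add r (rho K).

Definition optimal_cover {A} {R} (D : lang A -> Prop) (L : lang A)
    (add : R -> R -> R) (rho : lang A -> R) (Ks : seq (lang A)) : Prop :=
  cover_of D L Ks /\
  (forall Ks', cover_of D L Ks' -> forall r, imprint add rho Ks r -> imprint add rho Ks' r).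

(** I_D[L, rho]: the rho-imprint of an optimal D-cover of L *)
Definition opt_imprint {A} {R} (D : lang A -> Prop) (L : lang A)
    (add : R -> R -> R) (rho : lang A -> R) (r : R) : Prop :=
  exists Ks, optimal_cover D L add rho Ks /\ imprint add rho Ks r.

Definition SF_saturated {A} {N R : Type} (mulN : N -> N -> N) (eta : seq A -> N)
    (add : R -> R -> R) (mul : R -> R -> R) (one : R) (omega : nat)
    (rho : lang A -> R) (S : N -> R -> Prop) : Prop :=
  [/\ (forall w, S (eta w) (rho (lword w))),
      (forall t r q, S t r -> rle add q r -> S t q),
      (forall s q t r, S s q -> S t r -> S (mulN s t) (mul q r)) &
      (forall e r, mulN e e = e -> S e r ->
         S e (add (rpow mul one r omega) (rpow mul one r omega.+1)))].

(* Main.v *)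
Require Import Defs.
From mathcomp Require Import all_boot zify.
From Stdlib Require Import Classical ClassicalEpsilon FunctionalExtensionality PropExtensionality.
Set Implicit Arguments. Unset Strict Implicit. Unset Printing Implicit Defensive.

Definition pb (P : Prop) : bool := if excluded_middle_informative P then true else false.
Lemma pbP (P : Prop) : reflect P (pb P).
Proof. rewrite /pb; case: excluded_middle_informative => H; by constructor. Qed.

Lemma lext {A} (K L : lang A) : (forall w, K w <-> L w) -> K = L.
Proof. move=> H; apply: functional_extensionality => w; apply: propositional_extensionality; exact: H. Qed.

Section SFclos.
Variable A : Type.
Variable C : lang A -> Prop.

Lemma SF_ext K L : SF C K -> (forall w, K w <-> L w) -> SF C L.
Proof. by move=> HK /lext <-. Qed.

Lemma SF_inter K L : SF C K -> SF C L -> SF C (linter K L).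
Proof.
move=> HK HL; apply: (SF_ext (SF_compl (SF_union (SF_compl HK) (SF_compl HL)))).
move=> w; rewrite /lcompl /lunion /linter; split.
- by move=> H; split; apply: NNPP => H'; apply: H; [left|right].
- by case=> H1 H2 [].
Qed.

Lemma SF_mono (C' : lang A -> Prop) L : (forall K, C K -> C' K) -> SF C L -> SF C' L.
Proof. move=> H; elim => *; [apply: SF_base; exact: H| exact: SF_letter| exact: SF_union| exact: SF_compl| exact: SF_concat]; by []. Qed.
End SFclos.

Definition hat {T X : Type} (mul : X -> X -> X) (one : X) (f : T -> X) (w : seq T) : X :=
  foldr (fun a acc => mul (f a) acc) one w.

Lemma hat_cat {T X : Type} (mul : X -> X -> X) one (f : T -> X) u v :
  is_monoid mul one -> hat mul one f (u ++ v) = mul (hat mul one f u) (hat mul one f v).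
Proof.
case=> HA H1 _; elim: u => [|a u IH] /=; first by rewrite H1.
by rewrite IH HA.
Qed.

Section Rpow.
Variables (X : Type) (mul : X -> X -> X) (one : X).
Hypothesis Hm : is_monoid mul one.

Lemma rpowS r n : rpow mul one r n.+1 = mul r (rpow mul one r n).
Proof. by []. Qed.

Lemma rpowD r m n : rpow mul one r (m + n) = mul (rpow mul one r m) (rpow mul one r n).
Proof.
case: Hm => HA H1 _; elim: m => [|m IH]; first by rewrite /= H1.
by rewrite addSn !rpowS IH HA.
Qed.

Lemma rpowSr r n : rpow mul one r n.+1 = mul (rpow mul one r n) r.
Proof. case: (Hm) => _ _ H1r; by rewrite -addn1 rpowD /= H1r. Qed.

Lemma rpowM r m n : rpow mul one r (m * n) = rpow mul one (rpow mul one r m) n.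
Proof. elim: n => [|n IH]; first by rewrite muln0. by rewrite mulnS rpowD IH. Qed.

Lemma rpow_idem r n : mul r r = r -> 0 < n -> rpow mul one r n = r.
Proof.
case: Hm => _ _ H1r Hr; case: n => // n _; elim: n => [|n IH]; first by rewrite /= H1r.
by rewrite rpowS IH Hr.
Qed.
End Rpow.

Section SR.
Variables (R : Type) (add : R -> R -> R) (zero : R) (mul : R -> R -> R) (one : R).
Hypothesis H : idem_semiring add zero mul one.

Lemma sr_monoid : is_monoid mul one.
Proof. by case: H => _ [? ? ?]. Qed.

Lemma rle_refl r : rle add r r.
Proof. by case: H => [[_ _ Hi _]] _ _ _; exact: Hi. Qed.

Lemma rle_trans a b c : rle add a b -> rle add b c -> rle add a c.
Proof. case: H => [[HA _ _ _]] _ _ _; rewrite /rle => Hab Hbc. by rewrite -Hbc HA Hab. Qed.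

Lemma rle_addl a b : rle add a (add a b).
Proof. case: H => [[HA _ Hi _]] _ _ _; by rewrite /rle HA Hi. Qed.

Lemma rle_addr a b : rle add b (add a b).
Proof. case: H => [[HA HC Hi _]] _ _ _; by rewrite /rle HC -HA Hi. Qed.

Lemma rle_lub a b z : rle add a z -> rle add b z -> rle add (add a b) z.
Proof. case: H => [[HA _ _ _]] _ _ _; rewrite /rle => Ha Hb; by rewrite -HA Hb Ha. Qed.

Lemma rle_add a b a' b' : rle add a a' -> rle add b b' -> rle add (add a b) (add a' b').
Proof. move=> H1 H2; apply: rle_lub; [apply: (rle_trans H1); exact: rle_addl | apply: (rle_trans H2); exact: rle_addr]. Qed.

Lemma rle_zero a : rle add zero a.
Proof. case: H => [[HA HC Hi H0]] _ _ _; by rewrite /rle H0. Qed.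

Lemma mul_monol c a b : rle add a b -> rle add (mul c a) (mul c b).
Proof. case: H => _ _ _ [_ Hd]; rewrite /rle => Hab; by rewrite -Hd Hab. Qed.

Lemma mul_monor c a b : rle add a b -> rle add (mul a c) (mul b c).
Proof. case: H => _ _ _ [Hd _]; rewrite /rle => Hab; by rewrite -Hd Hab. Qed.

Lemma mul_mono a b a' b' : rle add a a' -> rle add b b' -> rle add (mul a b) (mul a' b').
Proof. move=> H1 H2; apply: (rle_trans (mul_monol a H2)); exact: mul_monor. Qed.

Lemma rpow_mono a b n : rle add a b -> rle add (rpow mul one a n) (rpow mul one b n).
Proof. move=> Hab; elim: n => [|n IH]; first exact: rle_refl. rewrite !rpowS; exact: mul_mono. Qed.
End SR.

Lemma cat_split {A : Type} (x u p q : seq A) a :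
  x ++ u = p ++ a :: q ->
  (exists x2, x = p ++ a :: x2 /\ q = x2 ++ u) \/ (exists p', p = x ++ p' /\ u = p' ++ a :: q).
Proof.
elim: x p => [|b x IH] p /=; first by move=> ->; right; exists p.
case: p => [|c p] /=.
- case=> -> <-; left; by exists x.
- case=> -> /IH [[x2 [-> ->]]|[p' [-> ->]]]; [left; by exists x2 | right; by exists p'].
Qed.

Section Sound.
Variables (A : finType) (N : finType) (mulN : N -> N -> N) (oneN : N) (eta : seq A -> N).
Hypothesis Hmon : is_monoid mulN oneN.
Hypothesis Heta0 : eta [::] = oneN.
Hypothesis HetaM : forall u v, eta (u ++ v) = mulN (eta u) (eta v).

Fixpoint eqk (k : nat) (u v : seq A) : Prop :=
  if k is k'.+1 then
    [/\ eqk k' u v,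
       (forall u1 a u2, u = u1 ++ a :: u2 -> exists v1 v2, v = v1 ++ a :: v2 /\ eqk k' u1 v1 /\ eqk k' u2 v2) &
       (forall v1 a v2, v = v1 ++ a :: v2 -> exists u1 u2, u = u1 ++ a :: u2 /\ eqk k' u1 v1 /\ eqk k' u2 v2)]
  else eta u = eta v.

Lemma eqk_refl k u : eqk k u u.
Proof.
elim: k u => [|k IH] u //=; split => //.
- move=> u1 a u2 ->; exists u1, u2; by split.
- move=> u1 a u2 ->; exists u1, u2; by split.
Qed.

Lemma eqk_sym k u v : eqk k u v -> eqk k v u.
Proof.
elim: k u v => [|k IH] u v /=; first by [].
case=> H0 H1 H2; split; first exact: IH.
- move=> v1 a v2 /H2 [u1 [u2 [-> [? ?]]]]; exists u1, u2; split=> //; split; exact: IH.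
- move=> u1 a u2 /H1 [v1 [v2 [-> [? ?]]]]; exists v1, v2; split=> //; split; exact: IH.
Qed.

Lemma eqk_trans k u v w : eqk k u v -> eqk k v w -> eqk k u w.
Proof.
elim: k u v w => [|k IH] u v w /=; first by move=> -> ->.
case=> H0 H1 H2 [G0 G1 G2]; split; first exact: IH H0 G0.
- move=> u1 a u2 /H1 [v1 [v2 [/G1 [w1 [w2 [-> [E1 E2]]]] [F1 F2]]]].
  exists w1, w2; split=> //; split; [exact: IH F1 E1 | exact: IH F2 E2].
- move=> w1 a w2 /G2 [v1 [v2 [/H2 [u1 [u2 [-> [E1 E2]]]] [F1 F2]]]].
  exists u1, u2; split=> //; split; [exact: IH E1 F1 | exact: IH E2 F2].
Qed.

Lemma eqk_le j k u v : j <= k -> eqk k u v -> eqk j u v.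
Proof.
move=> /subnK <-; elim: (k - j) => [|d IH] //= H.
by case: H => /IH.
Qed.

Lemma eqk_eta k u v : eqk k u v -> eta u = eta v.
Proof. by move/(eqk_le (leq0n k)). Qed.

Lemma eqk_catl k x u v : eqk k u v -> eqk k (x ++ u) (x ++ v).
Proof.
elim: k x u v => [|k IH] x u v /=; first by move=> H; rewrite !HetaM H.
have forth : forall u v, eqk k.+1 u v -> forall p a q, x ++ u = p ++ a :: q ->
    exists v1 v2, x ++ v = v1 ++ a :: v2 /\ eqk k p v1 /\ eqk k q v2.
  move=> u' v' [H0 H1 _] p a q E.
  case: (cat_split E) => [[x2 [-> ->]]|[p' [-> /H1 [v1 [v2 [-> [E1 E2]]]]]]].
  - exists p, (x2 ++ v'); split; first by rewrite -catA.
    split; [exact: eqk_refl | exact: IH].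
  - exists (x ++ v1), v2; split; first by rewrite catA.
    split=> //; exact: IH.
move=> H; have Hs : eqk k.+1 v u := eqk_sym (H : eqk k.+1 u v).
split; first by case: H => /IH.
- exact: forth.
- move=> v1 a v2 /(forth _ _ Hs) [u1 [u2 [-> [? ?]]]].
  exists u1, u2; split=> //; split; exact: eqk_sym.
Qed.

Lemma eqk_catr k y u v : eqk k u v -> eqk k (u ++ y) (v ++ y).
Proof.
elim: k y u v => [|k IH] y u v /=; first by move=> H; rewrite !HetaM H.
have forth : forall u v, eqk k.+1 u v -> forall p a q, u ++ y = p ++ a :: q ->
    exists v1 v2, v ++ y = v1 ++ a :: v2 /\ eqk k p v1 /\ eqk k q v2.
  move=> u' v' [H0 H1 _] p a q E.
  case: (cat_split E) => [[u2 [/H1 [v1 [v2 [-> [E1 E2]]]] ->]]|[y1 [-> ->]]].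
  - exists v1, (v2 ++ y); split; first by rewrite -catA.
    split=> //; exact: IH.
  - exists (v' ++ y1), q; split; first by rewrite -catA.
    split; [exact: IH | exact: eqk_refl].
move=> H; have Hs : eqk k.+1 v u := eqk_sym (H : eqk k.+1 u v).
split; first by case: H => /IH.
- exact: forth.
- move=> v1 a v2 /(forth _ _ Hs) [u1 [u2 [-> [? ?]]]].
  exists u1, u2; split=> //; split; exact: eqk_sym.
Qed.

Lemma eqk_cat k u v u' v' : eqk k u v -> eqk k u' v' -> eqk k (u ++ u') (v ++ v').
Proof. move=> H1 H2; apply: (eqk_trans (eqk_catr u' H1)); exact: eqk_catl. Qed.

Lemma SF_sat (C : lang A -> Prop) :
  (forall L, C L -> exists F : {set N}, L = preimage_lang eta F) ->
  forall L, SF C L -> exists k, forall u v, eqk k u v -> L u -> L v.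
Proof.
move=> HC L0 HL; elim: HL.
- move=> L /HC [F ->]; exists 0 => u v /= E; by rewrite /preimage_lang E.
- move=> a; exists 2 => u v [[_ _ _] H1 _]; rewrite /lletter => Hu; move: H1; rewrite Hu.
  move=> /(_ [::] a [::] (erefl _)) [v1 [v2 [-> [[_ _ G1] [_ _ G2]]]]].
  case: v1 G1 => [|b v1] G1; last by case: (G1 [::] b v1 erefl) => [[|? ?]] [? []].
  case: v2 G2 => [|b v2] G2; last by case: (G2 [::] b v2 erefl) => [[|? ?]] [? []].
  by [].
- move=> K L _ [k1 H1] _ [k2 H2]; exists (maxn k1 k2) => u v E [Hu|Hu].
  + left; apply: H1 Hu; apply: eqk_le E; exact: leq_maxl.
  + right; apply: H2 Hu; apply: eqk_le E; exact: leq_maxr.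
- move=> L _ [k H]; exists k => u v E Hu Hv; apply: Hu; apply: H Hv; exact: eqk_sym.
- move=> K L _ [k1 H1] _ [k2 H2]; exists (maxn k1 k2).+1 => u v E [p [q [Hpq [Kp Lq]]]].
  case: q Hpq Lq => [|a q] Hpq Lq.
  + rewrite cats0 in Hpq; subst p; exists v, [::]; rewrite cats0; split=> //; split=> //.
    apply: H1 Kp; apply: (eqk_le _ E); apply: leq_trans (leq_maxl _ _) _; exact: leqnSn.
  + case: E => _ /(_ p a q Hpq) [v1 [v2 [-> [E1 E2]]]] _.
    exists v1, (a :: v2); split=> //; split.
    * apply: H1 Kp; apply: eqk_le E1; exact: leq_maxl.
    * apply: H2 Lq; apply: (eqk_catl [:: a]); apply: eqk_le E2; exact: leq_maxr.
Qed.

Definition wpow (u : seq A) n := flatten (nseq n u).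

Lemma wpowS u n : wpow u n.+1 = u ++ wpow u n.
Proof. by []. Qed.

Lemma wpowD u m n : wpow u (m + n) = wpow u m ++ wpow u n.
Proof. elim: m => [|m IH] //=; by rewrite addSn wpowS IH catA. Qed.

Lemma wpow_split u n p a q : wpow u n = p ++ a :: q ->
  exists i u1 u2, [/\ i < n, u = u1 ++ a :: u2, p = wpow u i ++ u1 & q = u2 ++ wpow u (n - i.+1)].
Proof.
elim: n p => [|n IH] p; first by case: p.
rewrite wpowS => E; case: (cat_split E) => [[u2 [-> ->]]|[p' [-> /IH [i [u1 [u2 [Hi -> -> ->]]]]]]].
- exists 0, p, u2; split=> //; by rewrite subSS subn0.
- exists i.+1, u1, u2; split=> //; by rewrite wpowS catA.
Qed.

Lemma eta_wpow u n : mulN (eta u) (eta u) = eta u -> 0 < n -> eta (wpow u n) = eta u.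
Proof.
move=> He; case: n => // n _; elim: n => [|n IH].
- by rewrite /wpow /= cats0.
- by rewrite wpowS HetaM IH He.
Qed.

Fixpoint Tk k := if k is k'.+1 then (Tk k').*2.+1 else 1.

Lemma Tk_gt0 k : 0 < Tk k. Proof. by case: k. Qed.

Lemma aper k u n m : mulN (eta u) (eta u) = eta u -> Tk k <= n -> Tk k <= m ->
  eqk k (wpow u n) (wpow u m).
Proof.
move=> He; elim: k n m => [|k IH] n m /= Hn Hm.
  by rewrite !eta_wpow.
have forth : forall n m, (Tk k).*2.+1 <= n -> (Tk k).*2.+1 <= m ->
   forall p a q, wpow u n = p ++ a :: q ->
   exists v1 v2, wpow u m = v1 ++ a :: v2 /\ eqk k p v1 /\ eqk k q v2.
  move=> n' m' Hn' Hm' p a q /wpow_split [i [u1 [u2 [Hi Hu -> ->]]]].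
  pose i' := if i < Tk k then i else if n' - i.+1 < Tk k then m' - (n' - i) else Tk k.
  have Hi' : i' < m'.
    rewrite /i'; case: ifP => H1; first lia. case: ifP => H2; lia.
  have Hl : eqk k (wpow u i) (wpow u i').
    rewrite /i'; case: ifP => H1; first exact: eqk_refl.
    apply: IH; first lia. case: ifP => H2; lia.
  have Hr : eqk k (wpow u (n' - i.+1)) (wpow u (m' - i'.+1)).
    rewrite /i'; case: ifP => H1; first (apply: IH; lia).
    case: ifP => H2.
    + have -> : m' - (m' - (n' - i)).+1 = n' - i.+1 by lia. exact: eqk_refl.
    + apply: IH; lia.
  exists (wpow u i' ++ u1), (u2 ++ wpow u (m' - i'.+1)); split.
  + have -> : m' = i' + (1 + (m' - i'.+1)) by lia.
    rewrite !wpowD /wpow /= cats0 -/(wpow u _) Hu -!catA /=. congr (_ ++ _).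
    have -> : i' + (1 + (m' - i'.+1)) - i'.+1 = m' - i'.+1 by lia. by [].
  + split; [exact: eqk_catr | exact: eqk_catl].
have Hk : Tk k <= Tk k.+1 by rewrite /= -addnn; lia.
split; first (apply: IH; lia).
- exact: forth.
- move=> v1 a v2 /(forth m n Hm Hn) [u1 [u2 [-> [? ?]]]].
  exists u1, u2; split=> //; split; exact: eqk_sym.
Qed.

End Sound.

Definition unitof {M : Type} (mul : M -> M -> M) (one : M) (c : M) :=
  exists y, mul c y = one /\ mul y c = one.

Section LD.
Variables (M : finType) (mul : M -> M -> M) (one : M).
Hypothesis Hm : is_monoid mul one.
Variable c : M.

Definition ldP (z : M) : bool := [exists x, z == mul c x] && [exists y, z == mul y c].
Definition ldT : finType := {z : M | ldP z}.

Lemma ldP_l (z : ldT) : exists x, val z = mul c x.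
Proof. case: z => z /= /andP [/existsP [x /eqP ->] _]; by exists x. Qed.
Lemma ldP_r (z : ldT) : exists y, val z = mul y c.
Proof. case: z => z /= /andP [_ /existsP [y /eqP ->]]; by exists y. Qed.

Lemma ldP_intro z x y : z = mul c x -> z = mul y c -> ldP z.
Proof. move=> H1 H2; apply/andP; split; apply/existsP; [exists x | exists y]; exact/eqP. Qed.

Lemma ych_ex (z : ldT) : exists x, val z == mul c x.
Proof. by case/andP: (valP z) => /existsP. Qed.
Definition ych (z : ldT) : M := xchoose (ych_ex z).
Lemma ychP z : val z = mul c (ych z).
Proof. exact/eqP/(xchooseP (ych_ex z)). Qed.

Lemma ldmul_proof (z z' : ldT) : ldP (mul (val z) (ych z')).
Proof.
case: Hm => HA H1 H1r.
case: (ldP_l z) => x Hx; case: (ldP_r z) => y Hy; case: (ldP_r z') => y' Hy'.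
apply: (@ldP_intro _ (mul x (ych z')) (mul y y')).
- by rewrite Hx HA.
- by rewrite {1}Hy -HA -ychP Hy' HA.
Qed.
Definition ldmul (z z' : ldT) : ldT := Sub (mul (val z) (ych z')) (ldmul_proof z z').

Lemma ldone_proof : ldP c.
Proof. case: Hm => HA H1 H1r; apply: (@ldP_intro _ one one); by rewrite ?H1 ?H1r. Qed.
Definition ldone : ldT := Sub c ldone_proof.

Lemma ldmul_l (z z' : ldT) x : val z = mul x c -> val (ldmul z z') = mul x (val z').
Proof. case: Hm => HA _ _ Hx; by rewrite /= Hx -HA -ychP. Qed.

Lemma ldmul_r (z z' : ldT) y : val z' = mul c y -> val (ldmul z z') = mul (val z) y.
Proof.
case: Hm => HA _ _ Hy; case: (ldP_r z) => x Hx.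
by rewrite (ldmul_l _ Hx) Hy Hx HA.
Qed.

Lemma ld_monoid : is_monoid ldmul ldone.
Proof.
case: (Hm) => HA H1 H1r; split.
- move=> z1 z2 z3; apply: val_inj.
  case: (ldP_r z1) => x1 Hx1; case: (ldP_r z2) => x2 Hx2.
  rewrite (ldmul_l _ Hx1) (ldmul_l _ Hx2).
  have Hx12 : val (ldmul z1 z2) = mul (mul x1 x2) c by rewrite (ldmul_l _ Hx1) Hx2 HA.
  by rewrite (ldmul_l _ Hx12) HA.
- move=> z; apply: val_inj; rewrite (@ldmul_l _ _ one) //=; by rewrite H1.
- move=> z; apply: val_inj; rewrite (@ldmul_r _ _ one) //=; by rewrite H1r.
Qed.

Lemma ld_card_le : #|ldT| <= #|M|.
Proof. by rewrite card_sig max_card. Qed.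

Lemma ld_card_lt : ~ unitof mul one c -> #|ldT| < #|M|.
Proof.
case: (Hm) => HA H1 H1r => Hu; rewrite card_sig.
rewrite -(cardC [pred x | ldP x]) -{1}(addn0 #|_|) ltn_add2l.
apply/card_gt0P; exists one; rewrite inE /=; apply/negP => /andP [/existsP [x /eqP Hx] /existsP [y /eqP Hy]].
apply: Hu; exists x; split; first by rewrite -Hx.
have Exy : x = y by rewrite -(H1r y) Hx HA -Hy H1.
by rewrite Exy -Hy.
Qed.

Lemma ld_rpow (z : ldT) a n : val z = mul c a ->
  val (rpow ldmul ldone z n) = mul c (rpow mul one a n).
Proof.
case: (Hm) => HA H1 H1r Hz; elim: n => [|n IH]; first by rewrite /= H1r.
rewrite rpowS (ldmul_r _ IH) Hz -HA; by [].
Qed.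

Lemma ld_unit_val : val ldone = c. Proof. by []. Qed.

End LD.

Section LDR.
Variables (R : finType) (add : R -> R -> R) (zero : R) (mul : R -> R -> R) (one : R).
Hypothesis Hs : idem_semiring add zero mul one.
Variable c : R.

Let Hm := sr_monoid Hs.

Lemma ldadd_proof (z z' : ldT mul c) : ldP mul c (add (val z) (val z')).
Proof.
case: Hs => _ _ _ [Hdl Hdr].
case: (ldP_l z) => x Hx; case: (ldP_r z) => y Hy; case: (ldP_l z') => x' Hx'; case: (ldP_r z') => y' Hy'.
apply: (@ldP_intro _ _ _ _ (add x x') (add y y')).
- by rewrite Hdr Hx Hx'.
- by rewrite Hdl Hy Hy'.
Qed.
Definition ldadd (z z' : ldT mul c) : ldT mul c := Sub (add (val z) (val z')) (ldadd_proof z z').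

Lemma ldadd_val z z' : val (ldadd z z') = add (val z) (val z'). Proof. by []. Qed.

Lemma ldzero_proof : ldP mul c zero.
Proof. case: Hs => _ _ [H0l H0r] _; apply: (@ldP_intro _ _ _ _ zero zero); by rewrite ?H0l ?H0r. Qed.
Definition ldzero : ldT mul c := Sub zero ldzero_proof.

Lemma ld_semiring : idem_semiring ldadd ldzero (@ldmul _ _ _ Hm c) (ldone Hm c).
Proof.
case: (Hs) => [[HA HC Hi H0]] Hmm [Z1 Z2] [D1 D2].
split; [split| exact: ld_monoid | split | split].
- move=> ? ? ?; apply: val_inj; by rewrite /= HA.
- move=> ? ?; apply: val_inj; by rewrite /= HC.
- move=> ?; apply: val_inj; by rewrite /= Hi.
- move=> ?; apply: val_inj; by rewrite /= H0.
- move=> z; apply: val_inj; rewrite /=; by rewrite Z1.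
- move=> z; apply: val_inj; case: (ldP_r z) => x Hx.
  rewrite (ldmul_l _ _ Hx) /=; by rewrite Z2.
- move=> z1 z2 z3; apply: val_inj; rewrite /=; by rewrite D1.
- move=> z1 z2 z3; apply: val_inj; case: (ldP_r z1) => x Hx.
  by rewrite (ldmul_l Hm (ldadd z2 z3) Hx) !ldadd_val (ldmul_l Hm z2 Hx) (ldmul_l Hm z3 Hx) D2.
Qed.

Lemma ld_omega om : is_omega mul one om -> is_omega (@ldmul _ _ _ Hm c) (ldone Hm c) om.
Proof.
case=> Hpos Hom; split=> // z; apply: val_inj.
case: (ldP_l z) => a Ha; have E := ld_rpow Hm om Ha.
rewrite (ldmul_r _ _ E) E.
case: Hm => HA _ _; by rewrite -HA Hom.
Qed.

Lemma ld_rle (z z' : ldT mul c) : rle ldadd z z' <-> rle add (val z) (val z').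
Proof.
rewrite /rle; split; first by move/(congr1 val).
move=> H; apply: val_inj; by rewrite /= H.
Qed.

End LDR.

Definition Bstar {T : finType} (B : {set T}) : lang T := fun w => all (fun a => a \in B) w.

Definition Calpha {T : Type} {N : finType} (mulN : N -> N -> N) (oneN : N) (al : T -> N) : lang T -> Prop :=
  fun L => exists F : {set N}, forall w, L w <-> hat mulN oneN al w \in F.

Definition satS {N R T : Type} (mulN : N -> N -> N) (oneN : N) (add : R -> R -> R)
   (mul : R -> R -> R) (one : R) (om : nat) (al : T -> N) (be : T -> R) (S : N -> R -> Prop) : Prop :=
  [/\ S oneN one, (forall a, S (al a) (be a)),
      (forall s q t r, S s q -> S t r -> S (mulN s t) (mul q r)) &
      (forall e r, mulN e e = e -> S e r -> S e (add (rpow mul one r om) (rpow mul one r om.+1)))].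

Definition goodE {T : Type} {N R : finType} (mulN : N -> N -> N) (oneN : N) (add : R -> R -> R)
   (mul : R -> R -> R) (one : R) (al : T -> N) (be : T -> R) (S : N -> R -> Prop)
   (e : lang T * N * R) : Prop :=
  [/\ SF (Calpha mulN oneN al) e.1.1, S e.1.2 e.2 &
      forall w, e.1.1 w -> hat mulN oneN al w = e.1.2 /\ rle add (hat mul one be w) e.2].

Definition GCc {T : finType} {N R : finType} (mulN : N -> N -> N) (oneN : N) (add : R -> R -> R)
   (mul : R -> R -> R) (one : R) (al : T -> N) (be : T -> R) (S : N -> R -> Prop) (B : {set T}) : Prop :=
  exists cov : seq (lang T * N * R),
    (forall e, List.In e cov -> goodE mulN oneN add mul one al be S e) /\
    (forall w, Bstar B w -> exists e, List.In e cov /\ e.1.1 w).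

Lemma In_map {X Y : Type} (f : X -> Y) x s : List.In x s -> List.In (f x) (map f s).
Proof. elim: s => [|y s IH] //= [->|/IH]; by [left|right]. Qed.

Lemma In_mem {X : eqType} (x : X) s : x \in s -> List.In x s.
Proof. elim: s => [|y s IH] //=; rewrite inE => /orP [/eqP ->|/IH]; by [left|right]. Qed.

Lemma In_nth {X : Type} (x0 : X) s i : i < size s -> List.In (nth x0 s i) s.
Proof. elim: s i => [|y s IH] [|i] //= H; [by left | right; exact: IH]. Qed.

Section CalphaSF.
Variables (T : finType) (N : finType) (mulN : N -> N -> N) (oneN : N) (al : T -> N).
Local Notation Ca := (Calpha mulN oneN al).

Lemma SF_pre (F : {set N}) : SF Ca (fun w => hat mulN oneN al w \in F).
Proof. apply: SF_base; by exists F. Qed.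

Lemma SF_full : SF Ca lfull.
Proof. apply: SF_ext (SF_pre setT) _ => w; by rewrite in_setT. Qed.

Lemma SF_empty : SF Ca lempty.
Proof. apply: SF_ext (SF_pre set0) _ => w; by rewrite in_set0. Qed.

Lemma SF_Bstar (B : {set T}) : SF Ca (Bstar B).
Proof.
pose Lno (l : seq T) : lang T := fun w => all (fun x => x \notin l) w.
have H : forall l, SF Ca (Lno l).
  elim=> [|a l IH].
  - apply: SF_ext SF_full _ => w; rewrite /Lno; split=> // _; by elim: w.
  - have Ha : SF Ca (lcompl (lconcat lfull (lconcat (lletter a) lfull))).
      apply: SF_compl; apply: SF_concat SF_full _; apply: SF_concat (SF_letter _ _) SF_full.
    apply: SF_ext (SF_inter Ha IH) _ => w; rewrite /Lno /linter /lcompl /lconcat /lletter /=.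
    split.
    + case=> H1 H2; apply/allP => x xw; rewrite inE negb_or (allP H2 x xw) andbT.
      apply/negP => /eqP Ex; subst x; apply: H1.
      case/splitPr: xw => [p q]; exists p, (a :: q); split=> //; split=> //.
      by exists [:: a], q.
    + move=> Hw; split.
      * case=> p [q [Ew [_ [u [v [Eq [Eu _]]]]]]].
        move: Hw; rewrite Ew Eq Eu all_cat /= inE eqxx /=; by rewrite andbF.
      * apply/allP => x xw; move: (allP Hw x xw); rewrite inE negb_or; by case/andP.
apply: SF_ext (H (enum (~: B))) _ => w; rewrite /Lno /Bstar.
split=> /allP Hw; apply/allP => x /Hw; by rewrite mem_enum in_setC negbK.
Qed.

End CalphaSF.

Lemma In_map_inv {X Y : Type} (f : X -> Y) y s : List.In y (map f s) -> exists x, List.In x s /\ y = f x.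
Proof. elim: s => [|x s IH] //= [<-|/IH [x' [H ->]]]; [exists x; split=> //; by left | exists x'; split=> //; by right]. Qed.

Section GenMon.
Variables (M : Type) (mul : M -> M -> M) (one : M).
Hypothesis Hm : is_monoid mul one.

Lemma unit_one : unitof mul one one.
Proof. case: Hm => _ H1 _; exists one; by rewrite H1. Qed.

Lemma unit_mul x y : unitof mul one x -> unitof mul one y -> unitof mul one (mul x y).
Proof.
case: Hm => HA H1 H1r [x' [Hx1 Hx2]] [y' [Hy1 Hy2]]; exists (mul y' x'); split.
- by rewrite -HA (HA y) Hy1 H1 Hx1.
- by rewrite -HA (HA x') Hx2 H1 Hy2.
Qed.

Lemma unit_rpow x n : unitof mul one x -> unitof mul one (rpow mul one x n).
Proof. move=> Hx; elim: n => [|n IH]; [exact: unit_one | rewrite rpowS; exact: unit_mul]. Qed.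

Lemma unit_cancel u a : unitof mul one u -> mul u a = u -> a = one.
Proof. case: Hm => HA H1 H1r [u' [H2 H3]] E; by rewrite -(H1 a) -H3 -HA E. Qed.

Lemma unit_idem e : unitof mul one e -> mul e e = e -> e = one.
Proof. move=> He E; apply: (unit_cancel He); by rewrite E. Qed.
End GenMon.

Lemma hat_wpow {T : finType} {X : Type} (mul : X -> X -> X) one (f : T -> X) u n :
  is_monoid mul one -> hat mul one f (wpow u n) = rpow mul one (hat mul one f u) n.
Proof. move=> Hm; elim: n => [|n IH] //; by rewrite wpowS hat_cat // IH. Qed.

Lemma Bstar_cat {T : finType} (B : {set T}) u v : Bstar B (u ++ v) <-> Bstar B u /\ Bstar B v.
Proof. rewrite /Bstar all_cat; split; [by case/andP | by case=> -> ->]. Qed.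

Lemma Bstar_wpow {T : finType} (B : {set T}) u n : Bstar B u -> Bstar B (wpow u n).
Proof. move=> Hu; elim: n => [|n IH] //; rewrite wpowS; exact/Bstar_cat. Qed.

Section Group.
Variables (N : finType) (mulN : N -> N -> N) (oneN : N).
Hypothesis HN : is_monoid mulN oneN.
Variables (R : finType) (add : R -> R -> R) (zero : R) (mul : R -> R -> R) (one : R).
Hypothesis HR : idem_semiring add zero mul one.
Variable om : nat.
Hypothesis Hom : is_omega mul one om.
Variables (T : finType) (al : T -> N) (be : T -> R) (S : N -> R -> Prop).
Hypothesis HS : satS mulN oneN add mul one om al be S.
Variable B : {set T}.
Hypothesis Hu : forall b, b \in B -> unitof mulN oneN (al b) /\ unitof mul one (be b).

Let HRm := sr_monoid HR.
Local Notation ah := (hat mulN oneN al).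
Local Notation bh := (hat mul one be).

Lemma S_word w : S (ah w) (bh w).
Proof. case: HS => S1 S2 S3 _; elim: w => [|a w IH] //=; exact: S3. Qed.

Lemma S_rpow n r k : S n r -> S (rpow mulN oneN n k) (rpow mul one r k).
Proof. case: HS => S1 _ S3 _ H; elim: k => [|k IH] //=; exact: S3. Qed.

Lemma unit_word w : Bstar B w -> unitof mulN oneN (ah w) /\ unitof mul one (bh w).
Proof.
elim: w => [|a w IH] /=; first by split; apply: unit_one.
case/andP => /Hu [H1 H2] /IH [H3 H4]; split; exact: unit_mul.
Qed.

Lemma unit_period x y : unitof mulN oneN x -> unitof mul one y ->
  exists k, 0 < k /\ rpow mulN oneN x k = oneN /\ rpow mul one y k = one.
Proof.
move=> Hx Hy.
pose f := fun i : 'I_(#|{: N * R}|).+1 => (rpow mulN oneN x i, rpow mul one y i).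
have : ~ injective f.
  move=> /leq_card; by rewrite card_ord ltnn.
move=> Hni; have [i [j [Eij Nij]]] : exists i j, f i = f j /\ i <> j.
  apply: NNPP => H; apply: Hni => i j E; apply: NNPP => Ne; apply: H; by exists i, j.
have key : forall (i j : nat), i < j -> rpow mulN oneN x i = rpow mulN oneN x j ->
    rpow mul one y i = rpow mul one y j -> exists k, 0 < k /\ rpow mulN oneN x k = oneN /\ rpow mul one y k = one.
  move=> i' j' Hlt E1 E2; exists (j' - i'); split; first lia.
  have Ej : j' = i' + (j' - i') by lia.
  rewrite Ej !rpowD // in E1 E2; split.
  - apply: (unit_cancel HN (unit_rpow HN i' Hx)); by rewrite -E1.
  - apply: (unit_cancel HRm (unit_rpow HRm i' Hy)); by rewrite -E2.
case: Eij => E1 E2; case: (ltngtP i j) => H.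
- exact: key H E1 E2.
- exact: key H (esym E1) (esym E2).
- by case: Nij; apply: val_inj.
Qed.

Lemma unit_om v : unitof mul one v -> rpow mul one v om = one.
Proof.
case: Hom => Hpos Hid Hv; apply: (unit_idem HRm); [exact: unit_rpow | exact: Hid].
Qed.

Definition Vset : {set R} := [set v | pb (exists w, Bstar B w /\ ah w = oneN /\ bh w = v)].
Definition Zval : R := foldr (fun v acc => mul (add one v) acc) one (enum Vset).

Lemma S_Z : S oneN Zval.
Proof.
case: HS => S1 _ S3 S4; case: HN => _ H1N _.
have : forall v, v \in enum Vset -> v \in Vset by move=> v; rewrite mem_enum.
rewrite /Zval; elim: (enum Vset) => [|v l IH] Hl //=.
rewrite -[oneN]H1N; apply: S3; last by apply: IH => v' H; apply: Hl; rewrite inE H orbT.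
have : v \in Vset by apply: Hl; rewrite inE eqxx.
rewrite inE => /pbP [w [Hw [Hw1 Hw2]]].
have Hs : S oneN v by rewrite -Hw1 -Hw2; exact: S_word.
have := S4 oneN v (H1N oneN) Hs.
have Huv : unitof mul one v by rewrite -Hw2; case: (unit_word Hw).
rewrite rpowS unit_om //; case: HRm => _ _ ->; by [].
Qed.

Lemma Z_ge1 : forall l, rle add one (foldr (fun v acc => mul (add one v) acc) one l).
Proof.
elim=> [|v l IH] /=; first exact: (rle_refl HR _).
have := mul_mono HR (rle_addl HR one v) IH; case: HRm => _ H1 _; by rewrite H1.
Qed.

Lemma Z_geV v : v \in Vset -> rle add v Zval.
Proof.
rewrite -mem_enum /Zval; elim: (enum Vset) => [|x l IH] //=; rewrite inE => /orP [/eqP ->|/IH H].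
- have := mul_mono HR (rle_addr HR one x) (Z_ge1 l); case: HRm => _ _ H1r; by rewrite H1r.
- have := mul_mono HR (rle_addl HR one x) H; case: HRm => _ H1 _; by rewrite H1.
Qed.

Definition gent (t : N) : lang T * N * R :=
  match excluded_middle_informative (exists w, Bstar B w /\ ah w = t) with
  | left H => (linter (Bstar B) (fun w => ah w \in [set t]), t,
               mul (bh (proj1_sig (constructive_indefinite_description _ H))) Zval)
  | right _ => (lempty, oneN, one)
  end.

Lemma gent_good t : goodE mulN oneN add mul one al be S (gent t).
Proof.
rewrite /gent; case: excluded_middle_informative => H; last first.
  split => //=; [exact: SF_empty | by case: HS].
case: constructive_indefinite_description => wt [Hwt Ht] /=; split => /=.
- apply: SF_inter; [exact: SF_Bstar | exact: SF_pre].
- case: HS => _ _ S3 _; case: HN => _ _ H1r; rewrite -(H1r t); apply: S3; last exact: S_Z.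
  rewrite -Ht; exact: S_word.
- move=> w [Hw]; rewrite inE => /eqP Hwt'; split=> //.
  case: (unit_word Hwt) => U1 U2.
  case: (unit_period U1 U2) => k [Hk [Ek1 Ek2]].
  pose w' := wpow wt k.-1 ++ w.
  have Hw' : Bstar B w' by apply/Bstar_cat; split=> //; exact: Bstar_wpow.
  have Ew'1 : ah w' = oneN.
    rewrite /w' hat_cat // hat_wpow // Hwt' -Ht -rpowSr //; by rewrite prednK.
  have Ebw : bh w = mul (bh wt) (bh w').
    rewrite /w' hat_cat // hat_wpow //; case: HRm => HA _ _.
    by rewrite HA -rpowS prednK // Ek2; case: HRm => _ ->.
  rewrite Ebw; apply: (mul_monol HR); apply: Z_geV; rewrite inE; apply/pbP.
  by exists w'.
Qed.

Lemma GC_group : GCc mulN oneN add mul one al be S B.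
Proof.
exists (map gent (enum N)); split.
- move=> e He; case: (In_map_inv He) => t [_ ->]; exact: gent_good.
- move=> w Hw; exists (gent (ah w)); split; first by apply: In_map; apply: In_mem; rewrite mem_enum.
  rewrite /gent; case: excluded_middle_informative => H; last by case: H; exists w.
  case: constructive_indefinite_description => wt _ /=; split=> //; by rewrite inE.
Qed.

End Group.

Fixpoint disj {T N R : Type} (X prev : lang T) (l : seq (lang T * N * R)) : seq (lang T * N * R) :=
  match l with
  | [::] => [::]
  | e :: l' => (linter X (linter e.1.1 (lcompl prev)), e.1.2, e.2) :: disj X (lunion prev e.1.1) l'
  end.

Section Disj.
Variables (T : finType) (N R : finType) (mulN : N -> N -> N) (oneN : N) (add : R -> R -> R)
   (mul : R -> R -> R) (one : R) (al : T -> N) (be : T -> R) (S : N -> R -> Prop).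
Local Notation good := (goodE mulN oneN add mul one al be S).
Local Notation Ca := (Calpha mulN oneN al).

Lemma disj_good (X prev : lang T) (l : seq (lang T * N * R)) : SF Ca X -> SF Ca prev -> (forall e, List.In e l -> good e) ->
  forall e', List.In e' (disj X prev l) -> good e'.
Proof.
elim: l prev => [|e l IH] prev //= HX Hp Hl e' [<-|].
- case: (Hl e (or_introl erefl)) => H1 H2 H3; split=> //=.
  + apply: SF_inter HX _; apply: SF_inter H1 _; exact: SF_compl.
  + by move=> w [_ [/H3 ? _]].
- apply: IH => //; last by move=> e0 He0; apply: Hl; right.
  apply: SF_union Hp _; by case: (Hl e (or_introl erefl)).
Qed.

Lemma disj_sub (X prev : lang T) (l : seq (lang T * N * R)) e' w : List.In e' (disj X prev l) -> e'.1.1 w -> X w /\ ~ prev w.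
Proof.
elim: l prev => [|e l IH] prev //= [<-|/IH H] /=; first by case=> ? [_ ?].
by case/H => ? Hn; split=> //; move=> Hp; apply: Hn; left.
Qed.

Lemma disj_cover (X prev : lang T) (l : seq (lang T * N * R)) w : X w -> ~ prev w -> (exists e, List.In e l /\ e.1.1 w) ->
  exists e', List.In e' (disj X prev l) /\ e'.1.1 w.
Proof.
elim: l prev => [|e l IH] prev //= HX Hp.
case=> e0 [[E|He0] Hw].
- subst e0; exists (linter X (linter e.1.1 (lcompl prev)), e.1.2, e.2); split; first by left.
  by split.
- case: (classic (e.1.1 w)) => He.
  + exists (linter X (linter e.1.1 (lcompl prev)), e.1.2, e.2); split; first by left. by split.
  + case: (IH (lunion prev e.1.1) HX) => [[]//|| e' [H1 H2]]; first by exists e0.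
    exists e'; split=> //; by right.
Qed.

Lemma disj_disjoint (X prev : lang T) (l : seq (lang T * N * R)) e0 i j w : i < size (disj X prev l) -> j < size (disj X prev l) ->
  (nth e0 (disj X prev l) i).1.1 w -> (nth e0 (disj X prev l) j).1.1 w -> i = j.
Proof.
elim: l prev i j => [|e l IH] prev i j //=.
case: i => [|i]; case: j => [|j] //= Hi Hj.
- move=> [_ [He _]] /(disj_sub (In_nth e0 Hj)) [_]; case; by right.
- move=> /(disj_sub (In_nth e0 Hi)) [_ Hn] [_ [He _]]; case: Hn; by right.
- move=> H1 H2; by rewrite (IH _ _ _ Hi Hj H1 H2).
Qed.
End Disj.

Lemma In_nth_inv {X : Type} (x0 x : X) s : List.In x s -> exists i, i < size s /\ nth x0 s i = x.
Proof.
elim: s => [|y s IH] //= [->|/IH [i [Hi Ei]]]; [by exists 0 | by exists i.+1].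
Qed.

Lemma ldP_sand {M : finType} (mul : M -> M -> M) one (Hm : is_monoid mul one) (c x : M) :
  ldP mul c (mul c (mul x c)).
Proof. case: Hm => HA _ _; apply: (@ldP_intro _ _ _ _ (mul x c) (mul c x)) => //; by rewrite HA. Qed.

Section Alg.
Variables (M : Type) (mul : M -> M -> M) (one : M).
Hypothesis Hm : is_monoid mul one.

Lemma sand_pow (nc m : M) : mul (mul nc m) m = mul nc m -> forall j, 0 < j -> mul nc (rpow mul one m j) = mul nc m.
Proof.
case: (Hm) => HA _ H1r E; case=> // j _; elim: j => [|j IH]; first by rewrite /= H1r.
by rewrite rpowSr // HA IH E.
Qed.

Lemma m_pow2 (nc n : M) : mul (mul nc (mul n nc)) (mul n nc) = mul nc (mul n nc) ->
  forall j, 1 < j -> rpow mul one (mul n nc) j = rpow mul one (mul n nc) 2.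
Proof.
case: (Hm) => HA H1 H1r E; case=> // [] // j; case: j => // j _.
elim: j => [|j IH] //.
have Hj := sand_pow E (ltn0Sn j.+1).
rewrite rpowS -HA Hj HA; by rewrite /= H1r.
Qed.
End Alg.

Lemma Bstar_cons {T : finType} (B : {set T}) a w : Bstar B (a :: w) <-> a \in B /\ Bstar B w.
Proof. rewrite /Bstar /=; split; [by case/andP | by case=> -> ->]. Qed.

Lemma Bstar_nil {T : finType} (B : {set T}) : Bstar B [::].
Proof. by []. Qed.

Section Blocks.
Variables (T I : finType) (H : I -> lang T) (c : T) (B : {set T}).
Hypothesis HcB : c \in B.
Hypothesis Hsub : forall i u, H i u -> Bstar (B :\ c) u.
Hypothesis Hcov : forall u, Bstar (B :\ c) u -> exists i, H i u.
Hypothesis Hdis : forall i j u, H i u -> H j u -> i = j.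

Definition CB : lang T := fun m => Bstar B m /\ (m = [::] \/ exists r, m = c :: r).

Inductive expand : seq I -> seq T -> Prop :=
| Ex0 : expand [::] [::]
| ExS i s u m : H i u -> expand s m -> expand (i :: s) (c :: u ++ m).

Lemma noc u : Bstar (B :\ c) u -> c \notin u.
Proof. move=> /allP Hu; apply/negP => /Hu; by rewrite !inE eqxx. Qed.

Lemma BsubB u : Bstar (B :\ c) u -> Bstar B u.
Proof. move=> /allP Hu; apply/allP => x /Hu; by rewrite inE => /andP []. Qed.

Lemma expand_CB s m : expand s m -> CB m.
Proof.
elim=> [|i s' u m' Hi _ [Hm' _]]; first by split=> //; left.
split; last by right; exists (u ++ m').
apply/Bstar_cons; split=> //; apply/Bstar_cat; split=> //; apply: BsubB; exact: (Hsub Hi).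
Qed.

Lemma split_uniq u1 u2 m1 m2 : c \notin u1 -> c \notin u2 ->
  (m1 = [::] \/ exists r, m1 = c :: r) -> (m2 = [::] \/ exists r, m2 = c :: r) ->
  u1 ++ m1 = u2 ++ m2 -> u1 = u2 /\ m1 = m2.
Proof.
elim: u1 u2 => [|a u1 IH] [|b u2] //=.
- move=> _ Hb [->|[r ->]] _ // [Eb _]; by move: Hb; rewrite inE -Eb eqxx.
- move=> Ha _ _ [->|[r ->]] // [Ea _]; by move: Ha; rewrite inE Ea eqxx.
- rewrite !inE !negb_or => /andP [_ Ha] /andP [_ Hb] H1 H2 [-> E].
  by case: (IH _ Ha Hb H1 H2 E) => -> ->.
Qed.

Lemma expand_head s m : expand s m -> m = [::] \/ exists r, m = c :: r.
Proof. case=> [|i s' u m' _ _]; [by left | right; by exists (u ++ m')]. Qed.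

Lemma expand_uniq s1 s2 m : expand s1 m -> expand s2 m -> s1 = s2.
Proof.
move=> E1; elim: E1 s2 => [|i s u m' Hi Hs IH] s2 E2.
- by move: E2; move Em: [::] => mm E2; case: E2 Em.
- move: E2; move Em: (c :: u ++ m') => mm E2; case: E2 Em => [//|j s' u' m'' Hj Hs'] [E].
  case: (split_uniq (noc (Hsub Hi)) (noc (Hsub Hj)) (expand_head Hs) (expand_head Hs') E) => Eu Em.
  subst u' m''; by rewrite (Hdis Hi Hj) (IH _ Hs').
Qed.

Lemma expand_cat s1 s2 m : expand (s1 ++ s2) m <-> exists m1 m2, [/\ m = m1 ++ m2, expand s1 m1 & expand s2 m2].
Proof.
split.
- elim: s1 m => [|i s1 IH] m /=; first by move=> H2; exists [::], m; split=> //; exact: Ex0.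
  move Es: (i :: s1 ++ s2) => ss E; case: E Es => [//|j s u m' Hj Hs] [Ei Es]; subst j s.
  case: (IH _ Hs) => m1 [m2 [-> H1 H2]]; exists (c :: u ++ m1), m2; split=> //.
  + by rewrite /= catA.
  + exact: ExS.
- case=> m1 [m2 [-> H1 H2]]; elim: H1 => [|i s u m' Hi Hs IH] //=.
  rewrite -catA; exact: ExS.
Qed.

Lemma Bdecomp r : Bstar B r -> exists u m', [/\ r = u ++ m', Bstar (B :\ c) u & CB m'].
Proof.
elim: r => [|a r IH]; first by move=> _; exists [::], [::]; split=> //; split=> //; left.
rewrite /Bstar /= => /andP [Ha Hr]; case: (IH Hr) => u [m' [Er Hu Hm']].
case: (eqVneq a c) => [Eac|Nac].
- exists [::], (a :: r); split=> //; split; first by rewrite /Bstar /= Ha.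
  right; exists r; by rewrite Eac.
- exists (a :: u), m'; split; [by rewrite Er | | by []].
  by rewrite /Bstar /= !inE Nac Ha.
Qed.

Lemma expand_ex m : CB m -> exists s, expand s m.
Proof.
move: {2}(size m) (leqnn (size m)) => n; elim: n m => [|n IH] m.
- case: m => // _ _; exists [::]; exact: Ex0.
- move=> Hs [Hm [->|[r Er]]]; first by exists [::]; exact: Ex0.
  move: Hm; rewrite Er /Bstar /= => /andP [_ Hr].
  case: (Bdecomp Hr) => u [m' [E Hu Hm']].
  case: (Hcov Hu) => i Hi.
  case: (IH m') => // [|s Hsm]; first by move: Hs; rewrite Er E /= size_cat; lia.
  exists (i :: s); rewrite E; exact: ExS.
Qed.

Definition sig0 (K : lang I) : lang T := fun m => exists s, K s /\ expand s m.

Lemma SF_CB (Ca : lang T -> Prop) : (forall D, SF Ca (Bstar D)) -> SF Ca CB.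
Proof.
move=> HBs.
  apply: (SF_ext (SF_union (HBs set0) (SF_inter (HBs B) (SF_concat (SF_letter _ c) (HBs setT))))).
move=> w; split.
- case=> [Hw|[Hw [p [q [Ew [Ep _]]]]]]; [split; last left | rewrite /lletter in Ep; subst w p; by split; [|right; exists q]].
  + by case: w Hw => // a w; rewrite /Bstar /= in_set0.
  + by case: w Hw => // a w; rewrite /Bstar /= in_set0.
- case=> Hw [Ew|[r Ew]]; subst w; [by left | right; split=> //].
  exists [:: c], r; split=> //; split=> //; by apply/allP => x; rewrite in_setT.
Qed.

Lemma sig0_SF (Ca : lang T -> Prop) (Cb : lang I -> Prop) :
  (forall D, SF Ca (Bstar D)) -> (forall i, SF Ca (H i)) -> (forall K, Cb K -> SF Ca (sig0 K)) ->
  forall K, SF Cb K -> SF Ca (sig0 K).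
Proof.
move=> HBs HH Hbase K HK.
have HCB : SF Ca CB := SF_CB HBs.
elim: HK => {K}.
- move=> K HK; exact: Hbase.
- move=> i; apply: SF_ext (SF_concat (SF_letter _ c) (HH i)) _ => m; split.
  + case=> p [q [-> [-> Hq]]]; exists [:: i]; split=> //.
    rewrite -[q]cats0; apply: ExS => //; exact: Ex0.
  + case=> s [-> E]; move: E; move Es: [:: i] => ss E; case: E Es => [//|j s' u m' Hj Hs'] [Ej Es'].
    subst j s'; move: Hs'; move Es0: [::] => s0 E; case: E Es0 => // _.
    exists [:: c], u; rewrite cats0; by split.
- move=> K L _ HK _ HL; apply: SF_ext (SF_union HK HL) _ => m; split.
  + by case=> [[s [Hs E]]|[s [Hs E]]]; exists s; split=> //; [left|right].
  + by case=> s [[Hs|Hs] E]; [left|right]; exists s.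
- move=> K _ HK; apply: SF_ext (SF_inter HCB (SF_compl HK)) _ => m; split.
  + case=> Hm Hn; case: (expand_ex Hm) => s Hs; exists s; split=> //.
    move=> Ks; apply: Hn; by exists s.
  + case=> s [Hs E]; split; first exact: expand_CB E.
    case=> s' [Hs' E']; apply: Hs; by rewrite (expand_uniq E E').
- move=> K L _ HK _ HL; apply: SF_ext (SF_concat HK HL) _ => m; split.
  + case=> m1 [m2 [-> [[s1 [H1 E1]] [s2 [H2 E2]]]]]; exists (s1 ++ s2); split.
    * by exists s1, s2.
    * apply/expand_cat; by exists m1, m2.
  + case=> s [[s1 [s2 [-> [H1 H2]]]] /expand_cat [m1 [m2 [-> E1 E2]]]].
    exists m1, m2; split=> //; split; [by exists s1 | by exists s2].
Qed.

End Blocks.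

Section LDstep.
Variables (N : finType) (mulN : N -> N -> N) (oneN : N).
Hypothesis HN : is_monoid mulN oneN.
Variables (R : finType) (add : R -> R -> R) (zero : R) (mul : R -> R -> R) (one : R).
Hypothesis HR : idem_semiring add zero mul one.
Variable om : nat.
Hypothesis Hom : is_omega mul one om.
Variables (T : finType) (al : T -> N) (be : T -> R) (S : N -> R -> Prop).
Hypothesis HS : satS mulN oneN add mul one om al be S.
Variables (B : {set T}) (c : T).
Hypothesis HcB : c \in B.

Local Notation HRm := (sr_monoid HR).
Local Notation nc := (al c).
Local Notation rc := (be c).
Local Notation NL := (ldT mulN nc).
Local Notation RL := (ldT mul rc).
Local Notation mulNL := (@ldmul _ _ _ HN nc).
Local Notation oneNL := (ldone HN nc).
Local Notation addRL := (@ldadd _ _ _ _ _ HR rc).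
Local Notation mulRL := (@ldmul _ _ _ HRm rc).
Local Notation oneRL := (ldone HRm rc).
Local Notation ah := (hat mulN oneN al).
Local Notation bh := (hat mul one be).
Local Notation good := (goodE mulN oneN add mul one al be S).

Hypothesis IHin : GCc mulN oneN add mul one al be S (B :\ c).
Hypothesis IHo : forall (T' : finType) (al' : T' -> NL) (be' : T' -> RL) (S' : NL -> RL -> Prop),
  satS mulNL oneNL addRL mulRL oneRL om al' be' S' ->
  forall B' : {set T'}, GCc mulNL oneNL addRL mulRL oneRL al' be' S' B'.

Definition cov0 := proj1_sig (constructive_indefinite_description _ IHin).
Lemma cov0P : (forall e, List.In e cov0 -> good e) /\
  (forall w, Bstar (B :\ c) w -> exists e, List.In e cov0 /\ e.1.1 w).
Proof. exact: (proj2_sig (constructive_indefinite_description _ IHin)). Qed.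

Definition Hd := disj (Bstar (B :\ c)) lempty cov0.
Definition m := size Hd.
Definition e0 : lang T * N * R := (lempty, oneN, one).
Definition ent (i : 'I_m) := nth e0 Hd i.
Definition Hb (i : 'I_m) : lang T := (ent i).1.1.

Lemma Hd_good e : List.In e Hd -> good e.
Proof.
apply: disj_good; [exact: SF_Bstar | exact: SF_empty | by case: cov0P].
Qed.

Lemma ent_good i : good (ent i).
Proof. apply: Hd_good; apply: In_nth; exact: ltn_ord. Qed.

Lemma Hb_sub i u : Hb i u -> Bstar (B :\ c) u.
Proof. move=> H; case: (disj_sub (In_nth e0 (ltn_ord i)) H) => //. Qed.

Lemma Hd_cov u : Bstar (B :\ c) u -> exists e, List.In e Hd /\ e.1.1 u.
Proof. move=> Hu; apply: disj_cover => //; by case: cov0P => _ /(_ _ Hu). Qed.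

Lemma Hb_cov u : Bstar (B :\ c) u -> exists i, Hb i u.
Proof.
move=> /Hd_cov [e [He Hu]]; case: (In_nth_inv e0 He) => i [Hi Ei].
exists (Ordinal Hi); by rewrite /Hb /ent /= Ei.
Qed.

Lemma Hb_dis i j u : Hb i u -> Hb j u -> i = j.
Proof. move=> H1 H2; apply: val_inj; exact: (disj_disjoint (ltn_ord i) (ltn_ord j) H1 H2). Qed.

Definition alb (i : 'I_m) : NL := Sub (mulN nc (mulN (ent i).1.2 nc)) (ldP_sand HN nc (ent i).1.2).
Definition beb (i : 'I_m) : RL := Sub (mul rc (mul (ent i).2 rc)) (ldP_sand HRm rc (ent i).2).

Definition Sb (n' : NL) (x' : RL) : Prop :=
  (val n' = nc /\ val x' = rc) \/
  exists n x, [/\ S n x, val n' = mulN nc (mulN n nc) & val x' = mul rc (mul x rc)].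

Lemma Sb_S n' x' : Sb n' x' -> S (val n') (val x').
Proof.
case: HS => S1 S2 S3 S4; case=> [[-> ->]|[n [x [Hs -> ->]]]]; first exact: S2.
exact: (S3 _ _ _ _ (S2 c) (S3 _ _ _ _ Hs (S2 c))).
Qed.

Lemma pow_om1_om xi : rpow mul one (rpow mul one xi om.+1) om = rpow mul one xi om.
Proof.
case: Hom => Hpos Hid.
by rewrite -(rpowM HRm) mulnC (rpowM HRm) (rpow_idem HRm (Hid xi)).
Qed.

Lemma pow_om1_om1 xi : rpow mul one (rpow mul one xi om.+1) om.+1 = rpow mul one xi om.+1.
Proof.
case: Hom => Hpos Hid.
rewrite -(rpowM HRm) (_ : om.+1 * om.+1 = om * om.+2 + 1); last by lia.
rewrite (rpowD HRm) (rpowM HRm xi om) (rpow_idem HRm (Hid xi)) // (rpowSr HRm xi om).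
case: HRm => _ _ H1r; by rewrite /= H1r.
Qed.

Lemma rpow_ldone k : rpow mulRL oneRL oneRL k = oneRL.
Proof. elim: k => [|k IH] //; rewrite rpowS IH; by case: (ld_monoid HRm rc) => _ ->. Qed.

Lemma satSb : satS mulNL oneNL addRL mulRL oneRL om alb beb Sb.
Proof.
case: (HS) => S1 S2 S3 S4; have HN' := HN; have HRm' := HRm.
case: HN' => HAN H1N H1rN; case: HRm' => HAR H1R H1rR.
split.
- by left.
- move=> i; right; exists (ent i).1.2, (ent i).2; split=> //; by case: (ent_good i).
- move=> n1 x1 n2 x2 [[E1 F1]|[n [x [Hs E1 F1]]]] [[E2 F2]|[n' [x' [Hs' E2 F2]]]].
  + left; split.
    * rewrite (@ldmul_l _ _ _ HN _ n1 n2 oneN); [by rewrite E2 H1N | by rewrite E1 H1N].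
    * rewrite (@ldmul_l _ _ _ HRm _ x1 x2 one); [by rewrite F2 H1R | by rewrite F1 H1R].
  + right; exists n', x'; split=> //.
    * rewrite (@ldmul_l _ _ _ HN _ n1 n2 oneN); [by rewrite E2 H1N | by rewrite E1 H1N].
    * rewrite (@ldmul_l _ _ _ HRm _ x1 x2 one); [by rewrite F2 H1R | by rewrite F1 H1R].
  + right; exists n, x; split=> //.
    * rewrite (@ldmul_r _ _ _ HN _ n1 n2 oneN); [by rewrite E1 H1rN | by rewrite E2 H1rN].
    * rewrite (@ldmul_r _ _ _ HRm _ x1 x2 one); [by rewrite F1 H1rR | by rewrite F2 H1rR].
  + right; exists (mulN n (mulN nc n')), (mul x (mul rc x')); split.
    * exact: (S3 _ _ _ _ Hs (S3 _ _ _ _ (S2 c) Hs')).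
    * rewrite (@ldmul_l _ _ _ HN _ n1 n2 (mulN nc n)); last by rewrite E1 HAN.
      by rewrite E2 !HAN.
    * rewrite (@ldmul_l _ _ _ HRm _ x1 x2 (mul rc x)); last by rewrite F1 HAR.
      by rewrite F2 !HAR.
- move=> n' x' Hid [[E F]|[n [x [Hs E F]]]].
  + have -> : x' = oneRL by apply: val_inj.
    rewrite !rpow_ldone; left; split=> //=.
    by case: HR => [[_ _ Hi _]] _ _ _; rewrite Hi.
  + pose m0 := mulN n nc; pose xi := mul x rc.
    have Hm0 : mulN (mulN nc m0) m0 = mulN nc m0.
      move/(congr1 val): Hid; rewrite (@ldmul_r _ _ _ HN _ n' n' m0) //; by rewrite E.
    have Hxi : val x' = mul rc xi by [].
    right.
    exists (mulN (mulN (rpow mulN oneN m0 om.+1) (rpow mulN oneN m0 om.-1)) n).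
    exists (mul (mul (add (rpow mul one xi om) (rpow mul one xi om.+1)) (rpow mul one xi om.-1)) x).
    split.
    * have Hm0x : S m0 xi by exact: (S3 _ _ _ _ Hs (S2 c)).
      apply: (S3 _ _ _ _ _ Hs); apply: (S3 _ _ _ _ _ (S_rpow HS _ Hm0x)).
      have Hsm : S (rpow mulN oneN m0 om.+1) (rpow mul one xi om.+1).
        exact: (S_rpow HS _ Hm0x).
      have Hidm : mulN (rpow mulN oneN m0 om.+1) (rpow mulN oneN m0 om.+1) = rpow mulN oneN m0 om.+1.
        rewrite -rpowD // !(m_pow2 HN Hm0) //; by case: Hom => Hpos _; lia.
      have := S4 _ _ Hidm Hsm; by rewrite pow_om1_om pow_om1_om1.
    * rewrite E; have Hpos : 0 < om by case: Hom.
      rewrite -HAN -/m0 -rpowD // -rpowSr // (sand_pow HN Hm0) //.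
    * rewrite ldadd_val (ld_rpow HRm om Hxi) (ld_rpow HRm om.+1 Hxi).
      case: HR => _ _ _ [D1 D2]; rewrite -D2; congr (mul rc _).
      have Hpos : 0 < om by case: Hom.
      rewrite -HAR -/xi -HAR -rpowSr // prednK // D1.
      case: Hom => _ Hid'; rewrite Hid' rpowS -HAR Hid'; by [].
Qed.

Definition covb := proj1_sig (constructive_indefinite_description _ (IHo satSb [set: 'I_m])).
Lemma covbP :
  (forall e, List.In e covb -> goodE mulNL oneNL addRL mulRL oneRL alb beb Sb e) /\
  (forall s, Bstar [set: 'I_m] s -> exists e, List.In e covb /\ e.1.1 s).
Proof. exact: (proj2_sig (constructive_indefinite_description _ (IHo satSb [set: 'I_m]))). Qed.

Lemma ent_ah i u : Hb i u -> ah u = (ent i).1.2.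
Proof. move=> H; case: (ent_good i) => _ _ /(_ u H) []. by []. Qed.
Lemma ent_bh i u : Hb i u -> rle add (bh u) (ent i).2.
Proof. move=> H; case: (ent_good i) => _ _ /(_ u H) []. by []. Qed.

Lemma expand_val s mm : expand Hb c s mm -> val (hat mulNL oneNL alb s) = mulN (ah mm) nc.
Proof.
have HN' := HN; case: HN' => HAN H1N H1rN.
elim=> [|i s' u mm' Hi Hs IH]; first by rewrite /= H1N.
have -> : hat mulNL oneNL alb (i :: s') = mulNL (alb i) (hat mulNL oneNL alb s') by [].
have -> : ah (c :: u ++ mm') = mulN nc (ah (u ++ mm')) by [].
rewrite (@ldmul_l _ _ _ HN _ (alb i) _ (mulN nc (ent i).1.2)); last by rewrite /= HAN.
by rewrite IH hat_cat // (ent_ah Hi) !HAN.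
Qed.

Lemma expand_bval s mm : expand Hb c s mm -> rle add (mul (bh mm) rc) (val (hat mulRL oneRL beb s)).
Proof.
have HR' := HRm; case: HR' => HAR H1R H1rR.
elim=> [|i s' u mm' Hi Hs IH]; first by rewrite /= H1R; exact: (rle_refl HR _).
have -> : hat mulRL oneRL beb (i :: s') = mulRL (beb i) (hat mulRL oneRL beb s') by [].
have -> : bh (c :: u ++ mm') = mul rc (bh (u ++ mm')) by [].
rewrite (@ldmul_l _ _ _ HRm _ (beb i) _ (mul rc (ent i).2)); last by rewrite /= HAR.
rewrite hat_cat //.
have -> : mul (mul rc (mul (bh u) (bh mm'))) rc = mul (mul rc (bh u)) (mul (bh mm') rc) by rewrite !HAR.
apply: (mul_mono HR) IH; apply: (mul_monol HR); exact: ent_bh.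
Qed.

Lemma sig0_base K' : Calpha mulNL oneNL alb K' -> SF (Calpha mulN oneN al) (sig0 Hb c K').
Proof.
case=> F HF.
pose G : {set N} := [set n | mulN n nc \in [set val z | z in F]].
apply: SF_ext (SF_inter (SF_CB c B (@SF_Bstar _ _ mulN oneN al)) (SF_pre mulN oneN al G)) _ => mm.
split.
- case=> Hc; rewrite inE => /imsetP [z Hz Ez].
  case: (expand_ex HcB Hb_cov Hc) => s Es; exists s; split=> //.
  apply/HF; suff -> : hat mulNL oneNL alb s = z by [].
  apply: val_inj; by rewrite (expand_val Es) Ez.
- case=> s [Ks Es]; split; first exact: (expand_CB HcB Hb_sub Es).
  rewrite inE -(expand_val Es); apply: imset_f; exact/HF.
Qed.

Definition fent (ea : lang T * N * R) (eb : lang 'I_m * NL * RL) (ed : lang T * N * R) : lang T * N * R :=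
  (lconcat (lconcat (lconcat ea.1.1 (sig0 Hb c eb.1.1)) (lletter c)) ed.1.1,
   mulN (mulN ea.1.2 (val eb.1.2)) ed.1.2, mul (mul ea.2 (val eb.2)) ed.2).

Definition covF := Hd ++ List.flat_map (fun ea => List.flat_map (fun eb => map (fent ea eb) Hd) covb) Hd.

Lemma fent_good ea eb ed : List.In ea Hd -> List.In eb covb -> List.In ed Hd -> good (fent ea eb ed).
Proof.
move=> /Hd_good [Sa Ha Ba] /(proj1 covbP) [Sbb Hbb Bb] /Hd_good [Sd Hdd Bd].
have HN' := HN; case: HN' => HAN H1N H1rN; have HR' := HRm; case: HR' => HAR H1R H1rR.
case: HS => _ _ S3 _.
split.
- have Hsig : SF (Calpha mulN oneN al) (sig0 Hb c eb.1.1).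
    apply: (sig0_SF HcB Hb_sub Hb_cov Hb_dis (@SF_Bstar _ _ mulN oneN al) _ _ Sbb).
    + move=> i; by case: (ent_good i).
    + exact: sig0_base.
  exact: (SF_concat (SF_concat (SF_concat Sa Hsig) (SF_letter _ c)) Sd).
- apply: (S3 _ _ _ _ _ Hdd); apply: (S3 _ _ _ _ Ha); exact: Sb_S.
- move=> w [w1 [wd [-> [[w2 [wc [-> [[wa [mm [-> [Hwa [s [Ks Es]]]]] Ewc]]]] Hwd]]]]].
  rewrite /lletter in Ewc; subst wc.
  case: (Ba _ Hwa) => Ea Fa; case: (Bd _ Hwd) => Ed Fd; case: (Bb _ Ks) => Eb Fb.
  have -> : (fent ea eb ed).1.2 = mulN (mulN ea.1.2 (val eb.1.2)) ed.1.2 by [].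
  have -> : (fent ea eb ed).2 = mul (mul ea.2 (val eb.2)) ed.2 by [].
  split.
  + rewrite !hat_cat // Ea Ed -Eb (expand_val Es).
    have -> : ah [:: c] = nc by rewrite /= H1rN.
    by rewrite !HAN.
  + rewrite !hat_cat //.
    have -> : bh [:: c] = rc by rewrite /= H1rR.
    apply: (mul_mono HR _ Fd); rewrite -HAR; apply: (mul_mono HR Fa).
    apply: (rle_trans HR (expand_bval Es)).
    exact/(ld_rle HR).
Qed.

Lemma lastc w : Bstar B w -> ~ Bstar (B :\ c) w ->
  exists p d, [/\ w = p ++ c :: d, Bstar B p & Bstar (B :\ c) d].
Proof.
elim: w => [|a w IH] //= /Bstar_cons [Ha Hw] Hn.
case: (classic (Bstar (B :\ c) w)) => Hw'.
- exists [::], w; split=> //; congr cons.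
  apply/eqP; apply: contraT => Nac; case: Hn; apply/Bstar_cons; split=> //.
  by rewrite !inE Nac Ha.
- case: (IH Hw Hw') => p [d [-> Hp Hd]]; exists (a :: p), d; split=> //.
  exact/Bstar_cons.
Qed.

Lemma GC_ld : GCc mulN oneN add mul one al be S B.
Proof.
exists covF; split.
- move=> e; rewrite /covF List.in_app_iff => [[He|He]]; first exact: Hd_good He.
  case: (proj1 (List.in_flat_map _ _ _) He) => ea [Ha He2].
  case: (proj1 (List.in_flat_map _ _ _) He2) => eb [Hb He3].
  case: (In_map_inv He3) => ed [Hd' ->]; exact: fent_good.
- move=> w Hw; case: (classic (Bstar (B :\ c) w)) => Hw'.
  + case: (Hd_cov Hw') => e [He Hew]; exists e; split=> //; apply/List.in_app_iff; by left.
  + case: (lastc Hw Hw') => p [d [Ew Hp Hd']].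
    case: (Bdecomp c Hp) => u [mm [Ep Hu Hmm]].
    case: (expand_ex HcB Hb_cov Hmm) => s Es.
    case: (proj2 covbP s) => [|eb [Heb Hs]]; first by apply/allP => x; rewrite in_setT.
    case: (Hb_cov Hu) => ia Hia; case: (Hb_cov Hd') => id Hid.
    exists (fent (ent ia) eb (ent id)); split.
    * apply/List.in_app_iff; right; apply/List.in_flat_map; exists (ent ia); split.
        exact: In_nth (ltn_ord ia).
      apply/List.in_flat_map; exists eb; split=> //; apply: In_map; exact: In_nth (ltn_ord id).
    * rewrite Ew Ep.
      exists ((u ++ mm) ++ [:: c]), d; split; first by rewrite -!catA.
      split=> //.
      exists (u ++ mm), [:: c]; split=> //; split=> //.
      exists u, mm; split=> //; split=> //; by exists s.
Qed.

End LDstep.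

Theorem GC (om : nat) : forall n (N : finType) (mulN : N -> N -> N) (oneN : N)
  (R : finType) (add : R -> R -> R) (zero : R) (mul : R -> R -> R) (one : R),
  #|N| + #|R| <= n -> is_monoid mulN oneN -> idem_semiring add zero mul one -> is_omega mul one om ->
  forall (T : finType) (al : T -> N) (be : T -> R) (S : N -> R -> Prop),
  satS mulN oneN add mul one om al be S -> forall B : {set T}, GCc mulN oneN add mul one al be S B.
Proof.
elim=> [|n IHn] N mulN oneN R add zero mul one Hc HN HR Hom T al be S HS B.
  have : 0 < #|N| by apply/card_gt0P; exists oneN.
  lia.
move: {2}#|B| (leqnn #|B|) => k; elim: k B => [|k IHk] B HB.
  apply: (GC_group HN HR Hom HS) => b Hb.
  have : 0 < #|B| by apply/card_gt0P; exists b.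
  lia.
case: (classic (exists c, c \in B /\ ~ (unitof mulN oneN (al c) /\ unitof mul one (be c)))) => [[c [HcB Hnu]]|Hall].
- apply: (@GC_ld _ _ _ HN _ _ _ _ _ HR _ Hom _ _ _ _ HS _ _ HcB).
  + apply: IHk; move: HB; rewrite (cardsD1 c B) HcB /=; lia.
  + move=> T' al' be' S' HS' B'.
    apply: (IHn _ _ _ _ _ _ _ _ _ (ld_monoid HN _) (ld_semiring HR _) (ld_omega HR _ Hom) _ _ _ _ HS').
    have H1 := ld_card_le mulN (al c); have H2 := ld_card_le mul (be c).
    case: (not_and_or _ _ Hnu) => Hu.
    * have := ld_card_lt HN Hu; lia.
    * have := ld_card_lt (sr_monoid HR) Hu; lia.
- apply: (GC_group HN HR Hom HS) => b Hb; apply: NNPP => H; apply: Hall; by exists b.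
Qed.

Section Main.
Variables (A : finType) (C : lang A -> Prop)
    (N : finType) (mulN : N -> N -> N) (oneN : N) (eta : seq A -> N)
    (R : finType) (add : R -> R -> R) (zero : R) (mul : R -> R -> R) (one : R)
    (rho : lang A -> R) (omega : nat).
Hypothesis Hcan : canonical_C_morphism C mulN oneN eta.
Hypothesis Hmr : multiplicative_rating add zero mul one rho.
Hypothesis Hnice : nice rho.
Hypothesis Hom : is_omega mul one omega.

Lemma HN : is_monoid mulN oneN. Proof. by case: Hcan => [[]]. Qed.
Lemma Heta0 : eta [::] = oneN. Proof. by case: Hcan => [[_ []]]. Qed.
Lemma HetaM u v : eta (u ++ v) = mulN (eta u) (eta v). Proof. by case: Hcan => [[_ [_ ->]]]. Qed.
Lemma HCpre F : C (preimage_lang eta F). Proof. by case: Hcan => [[]]. Qed.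
Lemma HCinv L : C L -> exists F : {set N}, L = preimage_lang eta F. Proof. by case: Hcan => _; apply. Qed.
Lemma HR : idem_semiring add zero mul one. Proof. by case: Hmr. Qed.
Lemma rho0 : rho lempty = zero. Proof. by case: Hmr => _ []. Qed.
Lemma rhoU K L : rho (lunion K L) = add (rho K) (rho L). Proof. by case: Hmr => _ [_ ->]. Qed.
Lemma rho_eps : rho (lword [::]) = one. Proof. by case: Hmr. Qed.
Lemma rhoC K L : rho (lconcat K L) = mul (rho K) (rho L). Proof. by case: Hmr. Qed.

Lemma rho_mono K L : lsubset K L -> rle add (rho K) (rho L).
Proof.
move=> H; rewrite /rle -rhoU; congr rho; apply: lext => w; split; last by right.
by case=> // /H.
Qed.

Lemma lword_cat (u v : seq A) : lword (u ++ v) = lconcat (lword u) (lword v).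
Proof.
apply: lext => w; split; first by move=> ->; exists u, v.
by case=> p [q [-> [-> ->]]].
Qed.

Definition alA (a : A) : N := eta [:: a].
Definition beA (a : A) : R := rho (lword [:: a]).

Lemma hat_eta w : hat mulN oneN alA w = eta w.
Proof.
elim: w => [|a w IH] /=; first by rewrite Heta0.
by rewrite IH -HetaM.
Qed.

Lemma hat_rho w : hat mul one beA w = rho (lword w).
Proof.
elim: w => [|a w IH] /=; first by rewrite rho_eps.
by rewrite IH /beA -rhoC -lword_cat.
Qed.

Lemma rho_bound K z : (forall w, K w -> rle add (rho (lword w)) z) -> rle add (rho K) z.
Proof.
move=> H; case: (Hnice K) => s [Hs ->].
elim: s Hs => [|w s IH] Hs.
- have -> : lfin [::] = @lempty A by apply: lext.
  rewrite rho0; exact: (rle_zero HR).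
- have -> : lfin (w :: s) = lunion (lword w) (lfin s).
    apply: lext => w'; rewrite /lfin /lunion /lword inE; split; [by case/orP => [/eqP|]; [left|right] | by case=> [->|->]; rewrite ?eqxx ?orbT].
  rewrite rhoU; apply: (rle_lub HR).
  + apply: H; apply: Hs; by rewrite /lfin inE eqxx.
  + apply: IH => w' Hw'; apply: Hs; by rewrite /lfin inE Hw' orbT.
Qed.

Lemma SF_Calpha L : SF (Calpha mulN oneN alA) L -> SF C L.
Proof.
apply: SF_mono => K [F HF]; have -> : K = preimage_lang eta F.
  apply: lext => w; by rewrite HF hat_eta.
exact: HCpre.
Qed.

Lemma complete (S : N -> R -> Prop) : SF_saturated mulN eta add mul one omega rho S ->
  forall t, exists Ks, cover_of (SF C) (preimage_lang eta [set t]) Ks /\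
    forall r, imprint add rho Ks r -> S t r.
Proof.
case=> S1 S2 S3 S4 t.
have HS : satS mulN oneN add mul one omega alA beA S.
  split=> //; first by have := S1 [::]; rewrite Heta0 rho_eps.
  move=> a; exact: S1.
have [cov [Hg Hc]] := GC (leqnn (#|N| + #|R|)) HN HR Hom HS [set: A].
exists (List.map (fun e => e.1.1) (List.filter (fun e => e.1.2 == t) cov)); split; [split|].
- move=> w; rewrite /preimage_lang inE => /eqP Hw.
  case: (Hc w) => [|e [He Hew]]; first by apply/allP => x; rewrite in_setT.
  exists e.1.1; split=> //; apply: List.in_map; apply/List.filter_In; split=> //.
  case: (Hg e He) => _ _ /(_ w Hew) [E _]; by rewrite -E hat_eta Hw eqxx.
- move=> K /List.in_map_iff [e [<- /List.filter_In [He _]]].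
  case: (Hg e He) => HSF _ _; exact: SF_Calpha.
- move=> r [K [/List.in_map_iff [e [<- /List.filter_In [He /eqP Het]]] Hr]].
  case: (Hg e He) => _ HSe Hb.
  apply: (S2 _ e.2); first by rewrite -Het.
  apply: (rle_trans HR Hr); apply: rho_bound => w Hw.
  case: (Hb w Hw) => _; by rewrite hat_rho.
Qed.

Inductive S0 : N -> R -> Prop :=
| S0w w : S0 (eta w) (rho (lword w))
| S0d t r q : S0 t r -> rle add q r -> S0 t q
| S0m s q t r : S0 s q -> S0 t r -> S0 (mulN s t) (mul q r)
| S0o e r : mulN e e = e -> S0 e r -> S0 e (add (rpow mul one r omega) (rpow mul one r omega.+1)).

Lemma S0_sat : SF_saturated mulN eta add mul one omega rho S0.
Proof. split; [exact: S0w | exact: S0d | exact: S0m | exact: S0o]. Qed.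

Definition cls k w0 : lang A := fun w => eqk eta k w0 w.
Definition Q t r := forall k, exists w0, eta w0 = t /\ rle add r (rho (cls k w0)).

Definition lpow (X : lang A) n := iter n (lconcat X) (lword [::]).

Lemma rho_lpow X n : rho (lpow X n) = rpow mul one (rho X) n.
Proof. elim: n => [|n IH]; first exact: rho_eps. by rewrite /lpow iterS -/(lpow X n) rhoC IH. Qed.

Lemma lpow_sub k u n : lsubset (lpow (cls k u) n) (cls k (wpow u n)).
Proof.
elim: n => [|n IH] w.
- by rewrite /lpow /= /lword => ->; exact: eqk_refl.
- rewrite /lpow iterS -/(lpow _ n) => [[p [q [-> [Hp Hq]]]]].
  rewrite /cls wpowS; apply: (eqk_cat HetaM Hp); exact: IH.
Qed.

Lemma S0_Q t r : S0 t r -> Q t r.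
Proof.
elim=> {t r}.
- move=> w k; exists w; split=> //; apply: rho_mono => w' ->; exact: eqk_refl.
- move=> t r q _ IH Hq k; case: (IH k) => w0 [E H]; exists w0; split=> //; exact: (rle_trans HR Hq H).
- move=> s q t r _ IH1 _ IH2 k.
  case: (IH1 k) => w1 [E1 H1]; case: (IH2 k) => w2 [E2 H2].
  exists (w1 ++ w2); split; first by rewrite HetaM E1 E2.
  apply: (rle_trans HR (mul_mono HR H1 H2)); rewrite -rhoC; apply: rho_mono.
  move=> w [p [q' [-> [Hp Hq]]]]; exact: (eqk_cat HetaM Hp Hq).
- move=> e r He _ IH k; case: (IH k) => u [Eu Hu].
  case: (Hom) => Hpos Hid.
  pose n := omega * Tk k.
  have Hn : Tk k <= n by rewrite /n; apply: leq_pmull.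
  have Hn0 : 0 < n by apply: leq_trans (Tk_gt0 k) Hn.
  have Hidu : mulN (eta u) (eta u) = eta u by rewrite Eu.
  exists (wpow u n); split; first by rewrite (eta_wpow HetaM Hidu Hn0).
  have Ern : rpow mul one r omega = rpow mul one r n.
    by rewrite /n (rpowM (sr_monoid HR)) (rpow_idem (sr_monoid HR) (Hid r)) // Tk_gt0.
  rewrite rpowS Ern -rpowS; apply: (rle_lub HR).
  + apply: (rle_trans HR (rpow_mono HR n Hu)); rewrite -rho_lpow; apply: rho_mono; exact: lpow_sub.
  + apply: (rle_trans HR (rpow_mono HR n.+1 Hu)); rewrite -rho_lpow; apply: rho_mono => w Hw.
    have := lpow_sub Hw; rewrite /cls => H; apply: eqk_trans H.
    apply: (aper HetaM Hidu Hn); exact: leq_trans Hn (leqnSn n).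
Qed.

Lemma sat_list (Ks : seq (lang A)) : (forall K, List.In K Ks -> SF C K) ->
  exists k, forall K, List.In K Ks -> forall u v, eqk eta k u v -> K u -> K v.
Proof.
elim: Ks => [|K Ks IH] HSF; first by exists 0.
case: (IH (fun K' H => HSF K' (or_intror H))) => k1 H1.
case: (SF_sat HetaM HCinv (HSF K (or_introl erefl))) => k2 H2.
exists (maxn k1 k2) => K' [<-|HK'] u v E.
- apply: H2; apply: eqk_le E; exact: leq_maxr.
- apply: H1 => //; apply: eqk_le E; exact: leq_maxl.
Qed.

Lemma Q_imprint t r Ks : Q t r -> cover_of (SF C) (preimage_lang eta [set t]) Ks -> imprint add rho Ks r.
Proof.
move=> HQ [Hcov HSF]; case: (sat_list HSF) => k Hk.
case: (HQ k) => w0 [E Hr].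
case: (Hcov w0) => [|K [HK Kw0]]; first by rewrite /preimage_lang E inE.
exists K; split=> //; apply: (rle_trans HR Hr); apply: rho_mono => w Hw.
exact: Hk HK _ _ Hw Kw0.
Qed.

Lemma sound t r Ks : S0 t r -> cover_of (SF C) (preimage_lang eta [set t]) Ks -> imprint add rho Ks r.
Proof. move=> /S0_Q; exact: Q_imprint. Qed.

Lemma P_S0 t r : opt_imprint (SF C) (preimage_lang eta [set t]) add rho r <-> S0 t r.
Proof.
split.
- case=> Ks [[Hcov Hopt] Himp].
  case: (complete S0_sat t) => Ks' [Hcov' HS'].
  exact: HS' (Hopt Ks' Hcov' r Himp).
- move=> H0; case: (complete S0_sat t) => Ks' [Hcov' HS'].
  exists Ks'; split; last exact: sound H0 Hcov'.
  split=> // Ks'' Hcov'' r' Hr'; exact: sound (HS' r' Hr') Hcov''.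
Qed.

End Main.

Unset Implicit Arguments.

Theorem theorem9p3 (A : finType) (C : lang A -> Prop)
    (N : finType) (mulN : N -> N -> N) (oneN : N) (eta : seq A -> N)
    (R : finType) (add : R -> R -> R) (zero : R) (mul : R -> R -> R) (one : R)
    (rho : lang A -> R) (omega : nat) :
  prevariety C -> finite_class C ->
  canonical_C_morphism C mulN oneN eta ->
  multiplicative_rating add zero mul one rho -> nice rho ->
  is_omega mul one omega ->
  let P := fun (t : N) (r : R) =>
             opt_imprint (SF C) (preimage_lang eta [set t]) add rho r in
  SF_saturated mulN eta add mul one omega rho P /\
  (forall S : N -> R -> Prop, SF_saturated mulN eta add mul one omega rho S ->
     forall t r, P t r -> S t r).
Proof.
move=> _ _ Hcan Hmr Hnice Hom P.
have E : forall t r, P t r <-> S0 mulN eta add mul one rho omega t r.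
  move=> t r; exact: (P_S0 Hcan Hmr Hnice Hom).
split.
- split.
  + move=> w; apply/E; exact: S0w.
  + move=> t r q /E H Hq; apply/E; exact: S0d H Hq.
  + move=> s q t r /E H1 /E H2; apply/E; exact: S0m H1 H2.
  + move=> e r He /E H; apply/E; exact: S0o He H.
- move=> S HS t r [Ks [[Hcov Hopt] Himp]].
  case: (complete Hcan Hmr Hnice Hom HS t) => Ks' [Hcov' HS'].
  exact: HS' (Hopt Ks' Hcov' r Himp).
Qed.
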